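(* The bicyclic monoid $B = \langle p,q : pq = 1 \rangle$ is not sofic.
   Context: The bicyclic monoid is the monoid given by the presentation with two generators $p,q$ and the single relation $pq=1$; every element can be written uniquely as $q^a p^b$ with $a,b$ non-negative integers. For a non-empty finite set $X$, $\mathrm{Map}(X)$ denotes the monoid of all maps $X \to X$ under composition (identity element $\mathrm{Id}_X$), equipped with the Hamming metric $d_X(f,g) = |\{x \in X : f(x) \neq g(x)\}|/|X|$. Let $M$ be a monoid with identity $1_M$, $K \subset M$ finite and $\varepsilon,\alpha>0$. A map $\varphi\colon M \to \mathrm{Map}(X)$ is a $(K,\varepsilon)$-morphism if $d_X(\varphi(k_1k_2),\varphi(k_1)\varphi(k_2)) \le \varepsilon$ for all $k_1,k_2 \in K$ and $d_X(\varphi(1_M),\mathrm{Id}_X) \le \varepsilon$; it is $(K,\alpha)$-injective if $d_X(\varphi(k_1),\varphi(k_2)) \ge \alpha$ for all distinct $k_1,k_2 \in K$. The monoid $M$ is called sofic if for every finite subset $K \subset M$ and every $\varepsilon>0$ there exist a non-empty finite set $X$ and a map $\varphi\colon M \to \mathrm{Map}(X)$ that is a $(K,1-\varepsilon)$-injective $(K,\varepsilon)$-morphism. *)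

(* Defs.v *)
From mathcomp Require Import all_boot all_order all_algebra.
From mathcomp Require Import zify.
Set Implicit Arguments. Unset Strict Implicit. Unset Printing Implicit Defensive.
Import Order.TTheory GRing.Theory Num.Theory.
Local Open Scope ring_scope.

Record monoid := Monoid {
  mcar :> Type;
  mop : mcar -> mcar -> mcar;
  mone : mcar;
  mopA : forall x y z, mop x (mop y z) = mop (mop x y) z;
  mop1m : forall x, mop mone x = x;
  mopm1 : forall x, mop x mone = x }.

(* Bicyclic monoid <p,q | pq = 1>, elements in normal form q^a p^b
   encoded as the pair (a, b).  (q^a p^b)(q^c p^d) = q^(a+c-b) p^(d+b-c)
   with truncated subtractions. *)
Definition bic_mul (x y : nat * nat) : nat * nat :=
  ((x.1 + (y.1 - x.2))%N, (y.2 + (x.2 - y.1))%N).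
Definition bic_one : nat * nat := (0%N, 0%N).
Definition bic_p : nat * nat := (0%N, 1%N).
Definition bic_q : nat * nat := (1%N, 0%N).

Lemma bic_mulA x y z : bic_mul x (bic_mul y z) = bic_mul (bic_mul x y) z.
Proof.
case: x => a b; case: y => c d; case: z => e f; rewrite /bic_mul /=.
congr pair; lia.
Qed.
Lemma bic_mul1m x : bic_mul bic_one x = x.
Proof. case: x => a b; rewrite /bic_mul /=; congr pair; lia. Qed.
Lemma bic_mulm1 x : bic_mul x bic_one = x.
Proof. case: x => a b; rewrite /bic_mul /=; congr pair; lia. Qed.

Definition bicyclic : monoid := Monoid bic_mulA bic_mul1m bic_mulm1.

Lemma bic_pq : bic_mul bic_p bic_q = bic_one. Proof. by []. Qed.

Definition hamming (X : finType) (f g : X -> X) : rat :=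
  #|[set x | f x != g x]|%:R / #|X|%:R.

Definition is_Keps_morphism (M : monoid) (X : finType) (phi : M -> X -> X)
    (K : seq M) (eps : rat) : Prop :=
  (forall k1 k2, List.In k1 K -> List.In k2 K ->
      hamming (phi (mop k1 k2)) (phi k1 \o phi k2) <= eps)
  /\ hamming (phi (mone M)) id <= eps.

Definition is_Kalpha_injective (M : monoid) (X : finType) (phi : M -> X -> X)
    (K : seq M) (alpha : rat) : Prop :=
  forall k1 k2, List.In k1 K -> List.In k2 K -> k1 <> k2 ->
      alpha <= hamming (phi k1) (phi k2).

Definition sofic (M : monoid) : Prop :=
  forall (K : seq M) (eps : rat), 0 < eps ->
    exists (X : finType) (phi : M -> X -> X),
      (0 < #|X|)%N /\ is_Kalpha_injective phi K (1 - eps)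
      /\ is_Keps_morphism phi K eps.

(* Main.v *)
Require Import Defs.
From mathcomp Require Import all_boot all_order all_algebra.
From mathcomp Require Import zify ring lra.
Import Order.TTheory GRing.Theory Num.Theory.
Local Open Scope ring_scope.
Set Implicit Arguments.

Lemma ham_le (X : finType) (f g : X -> X) (n : nat) :
  #|X| = n -> (0 < n)%N -> hamming f g <= 1/10 ->
  10 * (#|[set x | f x != g x]|%:R : rat) <= n%:R.
Proof.
move=> En n0; rewrite /hamming En ler_pdivrMr ?ltr0n // => H; lra.
Qed.

Lemma ham_ge (X : finType) (f g : X -> X) (n : nat) :
  #|X| = n -> (0 < n)%N -> 1 - 1/10 <= hamming f g ->
  9 * (n%:R : rat) <= 10 * #|[set x | f x != g x]|%:R.
Proof.
move=> En n0; rewrite /hamming En ler_pdivlMr ?ltr0n // => H.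
lra.
Qed.

Theorem theorem5p1 : ~ sofic bicyclic.
Proof.
move=> /(_ [:: bic_one; bic_p; bic_q; ((1,1)%N : bicyclic)] (1/10) isT).
move=> [X [phi [n0 [Hinj [Hmor H0]]]]].
set n := #|X| in n0.
have En : #|X| = n by [].
set P := phi bic_p. set Q := phi bic_q.
set I := phi bic_one. set R := phi ((1,1)%N : bicyclic).
have E1 : mop (m:=bicyclic) bic_p bic_q = bic_one by [].
have E2 : mop (m:=bicyclic) bic_q bic_p = ((1,1)%N : bicyclic) by [].
have h1 := Hmor bic_p bic_q.
rewrite E1 in h1.
have {h1} h1 := ham_le _ _ En n0 (h1 ltac:(simpl; tauto) ltac:(simpl; tauto)).
have h2 := Hmor bic_q bic_p.
rewrite E2 in h2.
have {h2} h2 := ham_le _ _ En n0 (h2 ltac:(simpl; tauto) ltac:(simpl; tauto)).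
have h0 := ham_le _ _ En n0 H0.
have hD := Hinj ((1,1)%N : bicyclic) bic_one ltac:(simpl; tauto) ltac:(simpl; tauto) ltac:(by []).
have {hD} hD := ham_ge _ _ En n0 hD.
set B1 := [set x | _ != _] in h1.
set B2 := [set x | _ != _] in h2.
set B0 := [set x | _ != _] in h0.
set D := [set x | _ != _] in hD.
pose A := [set x | P (Q x) == x].
have cA : (n <= #|A| + #|B0| + #|B1|)%N.
  rewrite -En -(cardsC A) -addnA leq_add2l.
  apply: leq_trans (leq_card_setU _ _); apply: subset_leq_card.
  apply/subsetP => x; rewrite !inE /= => hx.
  case: (eqVneq (phi bic_one x) x) => e //=; by rewrite e eq_sym.
have cQA : #|Q @: A| = #|A|.
  apply: card_in_imset => x y; rewrite !inE => /eqP hx /eqP hy hQ.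
  by rewrite -hx -hy hQ.
have cD : (#|D| + #|A| <= #|B2| + #|B0| + n)%N.
  rewrite -cQA -En -(cardsC (Q @: A)).
  suff: (#|D| <= #|B2| + #|B0| + #|~: (Q @: A)|)%N by lia.
  apply: leq_trans (leq_add (leq_card_setU B2 B0) (leqnn _)).
  apply: leq_trans (leq_card_setU _ _).
  apply: subset_leq_card; apply/subsetP => y; rewrite !inE => hy.
  case: (boolP (y \in Q @: A)) => hyA; last by rewrite orbT.
  rewrite orbF; case/imsetP: hyA => x; rewrite inE => /eqP hx hyx; subst y.
  rewrite /comp /P /Q in hx *; rewrite hx; apply/orP.
  case: (boolP (phi bic_one (Q x) == Q x)) => e; [left | by right].
  by apply: contra hy => /eqP ->; rewrite eq_sym.
move: cA cD; rewrite -!(ler_nat rat) !natrD => cA cD.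
have nP : (0:rat) < n%:R by rewrite ltr0n.
move: nP cA cD h0 h1 h2 hD.
move: (n%:R : rat) (#|A|%:R : rat) (#|B0|%:R : rat) (#|B1|%:R : rat) (#|B2|%:R : rat) (#|D|%:R : rat).
clear. move=> a b c d e f *. lra.
Qed.
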